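(* Let $\Gamma$ be an oriented Jordan smooth curve, $\alpha$ a diffeomorphism of $\Gamma$ onto itself with a nonempty set of periodic points, $X(\Gamma)$ a rearrangement-invariant space with Boyd indices $\alpha_X,\beta_X$, and $a,b\in C(\Gamma)$. Then for every $i\in\{0,1\}$ and every $k\in\mathbb Z$, $\eta_i^-(t)=\eta_i^-[\alpha_k(t)]$ and $\eta_i^+(t)=\eta_i^+[\alpha_k(t)]$ for all $t\in\Gamma$; hence the sets $\Gamma_j$, $j\in\{1,\dots,5\}$, are $\alpha_k$-invariant.
   Context: $\alpha_n$ are iterates of $\alpha$ ($n\in\mathbb Z$). $m$ is the common multiplicity of periodic points if $\alpha$ preserves orientation, $m=2$ if it changes orientation; $\Phi=\overline{\{t:\alpha_m(t)\ne t\}}$; $f_m(t)=\prod_{i=0}^{m-1}f[\alpha_i(t)]$. $\eta_0(t)=|a_m(t)|-|b_m(t)|\min\{|\alpha_m'(t)|^{-\alpha_X},|\alpha_m'(t)|^{-\beta_X}\}$, $\eta_1(t)=|a_m(t)|-|b_m(t)|\max\{|\alpha_m'(t)|^{-\alpha_X},|\alpha_m'(t)|^{-\beta_X}\}$, $\eta_i^\pm(t)=\lim_{n\to\pm\infty}\eta_i[\alpha_{mn}(t)]$. $\Gamma_1=\Gamma\setminus\Phi$, $\Gamma_2=\{t\in\Phi:\eta_1^-(t)>0,\eta_1^+(t)>0\}$, $\Gamma_3=\{t\in\Phi:\eta_0^-(t)<0,\eta_0^+(t)<0\}$, $\Gamma_4=\{t\in\Phi:\eta_0^+(t)<0<\eta_1^-(t)\}$,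 $\Gamma_5=\{t\in\Phi:\eta_0^-(t)<0<\eta_1^+(t)\}$. *)

(* Defs.v *)
From Stdlib Require Import Reals ZArith.
From Coquelicot Require Import Coquelicot.

Open Scope R_scope.

(* Gamma is the image of gam : R -> C, 1-periodic, C^1 with nonvanishing
   derivative, injective on [0,1): an oriented Jordan smooth curve, the
   orientation being the one given by increasing parameter. *)
Definition jordan_smooth_param (gam : R -> C) : Prop :=
  (forall s, gam (s + 1) = gam s) /\
  (forall s, ex_derive (fun u => fst (gam u)) s /\
             ex_derive (fun u => snd (gam u)) s) /\
  (forall s, continuous (Derive (fun u => fst (gam u))) s /\
             continuous (Derive (fun u => snd (gam u))) s) /\
  (forall s, Derive (fun u => fst (gam u)) s <> 0 \/
             Derive (fun u => snd (gam u)) s <> 0) /\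
  (forall s1 s2, 0 <= s1 < 1 -> 0 <= s2 < 1 -> gam s1 = gam s2 -> s1 = s2).

Definition curve (gam : R -> C) : C -> Prop := fun z => exists s, gam s = z.

Definition pos_ordered (gam : R -> C) (z1 z2 z3 : C) : Prop :=
  exists s1 s2 s3, s1 < s2 < s3 /\ s3 < s1 + 1 /\
    gam s1 = z1 /\ gam s2 = z2 /\ gam s3 = z3.

Definition preserves_orientation (gam : R -> C) (alpha : C -> C) : Prop :=
  forall z1 z2 z3, pos_ordered gam z1 z2 z3 ->
    pos_ordered gam (alpha z1) (alpha z2) (alpha z3).

Definition changes_orientation (gam : R -> C) (alpha : C -> C) : Prop :=
  forall z1 z2 z3, pos_ordered gam z1 z2 z3 ->
    pos_ordered gam (alpha z3) (alpha z2) (alpha z1).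

Definition curve_deriv (G : C -> Prop) (f : C -> C) (t d : C) : Prop :=
  filterlim (fun tau => Cdiv (Cminus (f tau) (f t)) (Cminus tau t))
    (within (fun tau => G tau /\ tau <> t) (locally t)) (locally d).

Definition cont_on (G : C -> Prop) (f : C -> C) : Prop :=
  forall t, G t -> filterlim f (within G (locally t)) (locally (f t)).

Definition diffeo_on (G : C -> Prop) (alpha alpha_inv : C -> C) : Prop :=
  (forall t, G t -> G (alpha t)) /\ (forall t, G t -> G (alpha_inv t)) /\
  (forall t, G t -> alpha_inv (alpha t) = t) /\
  (forall t, G t -> alpha (alpha_inv t) = t) /\
  (exists d : C -> C, cont_on G d /\
     forall t, G t -> curve_deriv G alpha t (d t) /\ d t <> 0) /\
  (exists d : C -> C, cont_on G d /\
     forall t, G t -> curve_deriv G alpha_inv t (d t) /\ d t <> 0).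

Definition iterz (alpha alpha_inv : C -> C) (k : Z) : C -> C :=
  match k with
  | Z0 => fun t => t
  | Zpos p => Nat.iter (Pos.to_nat p) alpha
  | Zneg p => Nat.iter (Pos.to_nat p) alpha_inv
  end.

Definition periodic_point (G : C -> Prop) (alpha : C -> C) (t : C) : Prop :=
  G t /\ exists n : nat, (0 < n)%nat /\ Nat.iter n alpha t = t.

Definition multiplicity (alpha : C -> C) (t : C) (n : nat) : Prop :=
  (0 < n)%nat /\ Nat.iter n alpha t = t /\
  forall k, (0 < k < n)%nat -> Nat.iter k alpha t <> t.

Definition is_m (gam : R -> C) (alpha : C -> C) (m : nat) : Prop :=
  (preserves_orientation gam alpha /\
     forall t, periodic_point (curve gam) alpha t -> multiplicity alpha t m) \/
  (changes_orientation gam alpha /\ m = 2%nat).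

Definition Phi (G : C -> Prop) (alpha : C -> C) (m : nat) (t : C) : Prop :=
  forall eps, 0 < eps -> exists tau, G tau /\ Nat.iter m alpha tau <> tau /\
    Cmod (Cminus tau t) < eps.

Fixpoint fm (f alpha : C -> C) (n : nat) (t : C) : C :=
  match n with
  | O => RtoC 1
  | S n' => Cmult (fm f alpha n' t) (f (Nat.iter n' alpha t))
  end.

(* dm stands for the derivative alpha_m' of alpha_m along Gamma *)
Definition eta0 (a b alpha dm : C -> C) (m : nat) (aX bX : R) (t : C) : R :=
  Cmod (fm a alpha m t) - Cmod (fm b alpha m t) *
    Rmin (Rpower (Cmod (dm t)) (- aX)) (Rpower (Cmod (dm t)) (- bX)).

Definition eta1 (a b alpha dm : C -> C) (m : nat) (aX bX : R) (t : C) : R :=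
  Cmod (fm a alpha m t) - Cmod (fm b alpha m t) *
    Rmax (Rpower (Cmod (dm t)) (- aX)) (Rpower (Cmod (dm t)) (- bX)).

Definition eta (i : nat) a b alpha dm m aX bX : C -> R :=
  match i with
  | O => eta0 a b alpha dm m aX bX
  | _ => eta1 a b alpha dm m aX bX
  end.

Definition eta_plus (i : nat) a b alpha alpha_inv dm m aX bX (t : C) : Rbar :=
  Lim_seq (fun n => eta i a b alpha dm m aX bX
                      (iterz alpha alpha_inv (Z.of_nat (m * n)) t)).

Definition eta_minus (i : nat) a b alpha alpha_inv dm m aX bX (t : C) : Rbar :=
  Lim_seq (fun n => eta i a b alpha dm m aX bX
                      (iterz alpha alpha_inv (- Z.of_nat (m * n)) t)).

Definition Gam (j : nat) (gam : R -> C) a b alpha alpha_inv dm m aX bX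
    (t : C) : Prop :=
  let G := curve gam in
  let e0p := eta_plus 0 a b alpha alpha_inv dm m aX bX t in
  let e0m := eta_minus 0 a b alpha alpha_inv dm m aX bX t in
  let e1p := eta_plus 1 a b alpha alpha_inv dm m aX bX t in
  let e1m := eta_minus 1 a b alpha alpha_inv dm m aX bX t in
  match j with
  | 1%nat => G t /\ ~ Phi G alpha m t
  | 2%nat => Phi G alpha m t /\ Rbar_lt (Finite 0) e1m /\ Rbar_lt (Finite 0) e1p
  | 3%nat => Phi G alpha m t /\ Rbar_lt e0m (Finite 0) /\ Rbar_lt e0p (Finite 0)
  | 4%nat => Phi G alpha m t /\ Rbar_lt e0p (Finite 0) /\ Rbar_lt (Finite 0) e1m
  | 5%nat => Phi G alpha m t /\ Rbar_lt e0m (Finite 0) /\ Rbar_lt (Finite 0) e1p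
  | _ => False
  end.

(* Main.v *)
Require Import Defs.
From Stdlib Require Import Reals ZArith Lra Lia ClassicalEpsilon Classical.
From Coquelicot Require Import Coquelicot.
Open Scope R_scope.

Lemma cont_pt_eps (f : R -> R) x : continuity_pt f x ->
  forall eps, 0 < eps -> exists d, 0 < d /\ forall y, Rabs (y - x) < d -> Rabs (f y - f x) < eps.
Proof.
  intros H eps He. destruct (H eps He) as [d [Hd H2]]. exists d. split; auto.
  intros y Hy. destruct (Req_dec y x) as [->|Hne].
  - rewrite Rminus_diag, Rabs_R0; auto.
  - apply (H2 y). split; [split; [exact I| auto]| exact Hy].
Qed.

Lemma eps_cont_pt (f : R -> R) x :
  (forall eps, 0 < eps -> exists d, 0 < d /\ forall y, Rabs (y - x) < d -> Rabs (f y - f x) < eps)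
  -> continuity_pt f x.
Proof.
  intros H eps He. destruct (H eps He) as [d [Hd H2]]. exists d. split; auto.
  intros y [_ Hy]. apply H2. exact Hy.
Qed.

Lemma sqrt2_lt2 : sqrt 2 < 2.
Proof.
  rewrite <- (sqrt_pow2 2) at 2 by lra. apply sqrt_lt_1_alt. lra.
Qed.

Lemma Cmod_small (z : C) e : 0 < e -> Rabs (fst z) < e / 2 -> Rabs (snd z) < e / 2 -> Cmod z < e.
Proof.
  intros He H1 H2. eapply Rle_lt_trans; [apply Cmod_2Rmax|].
  assert (Rmax (Rabs (fst z)) (Rabs (snd z)) < e/2) by (apply Rmax_lub_lt; auto).
  assert (0 <= Rmax (Rabs (fst z)) (Rabs (snd z))).
  { eapply Rle_trans; [apply Rabs_pos| apply Rmax_l]. }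
  pose proof sqrt2_lt2. assert (0 <= sqrt 2) by apply sqrt_pos.
  apply Rle_lt_trans with (2 * Rmax (Rabs (fst z)) (Rabs (snd z))); [|lra].
  apply Rmult_le_compat_r; lra.
Qed.

Lemma fst_Cminus (a b : C) : fst (Cminus a b) = fst a - fst b.
Proof. destruct a, b; simpl; ring. Qed.
Lemma snd_Cminus (a b : C) : snd (Cminus a b) = snd a - snd b.
Proof. destruct a, b; simpl; ring. Qed.

Lemma Cmod_sub_sym (a b : C) : Cmod (Cminus a b) = Cmod (Cminus b a).
Proof.
  replace (Cminus a b) with (Copp (Cminus b a)) by (destruct a, b; unfold Cminus, Copp, Cplus; simpl; f_equal; ring).
  apply Cmod_opp.
Qed.

Lemma Cmod_tri3 (a b c : C) : Cmod (Cminus a c) <= Cmod (Cminus a b) + Cmod (Cminus b c).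
Proof.
  replace (Cminus a c) with (Cplus (Cminus a b) (Cminus b c)) by
    (destruct a, b, c; unfold Cminus, Copp, Cplus; simpl; f_equal; ring).
  apply Cmod_triangle.
Qed.

Section Gam.
Variable gam : R -> C.
Hypothesis Hgam : jordan_smooth_param gam.

Lemma gam_cont s eps : 0 < eps -> exists d, 0 < d /\
  forall u, Rabs (u - s) < d -> Cmod (Cminus (gam u) (gam s)) < eps.
Proof.
  intros He. destruct Hgam as [_ [Hd _]]. destruct (Hd s) as [H1 H2].
  apply ex_derive_continuous in H1. apply ex_derive_continuous in H2.
  assert (C1 := proj2 (continuity_pt_filterlim _ _) H1).
  assert (C2 := proj2 (continuity_pt_filterlim _ _) H2).
  destruct (cont_pt_eps _ _ C1 (eps/2)) as [d1 [Hd1 P1]]; [lra|].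
  destruct (cont_pt_eps _ _ C2 (eps/2)) as [d2 [Hd2 P2]]; [lra|].
  exists (Rmin d1 d2). split; [apply Rmin_glb_lt; auto|].
  intros u Hu. apply Cmod_small; auto.
  - rewrite fst_Cminus. apply P1. eapply Rlt_le_trans; [exact Hu| apply Rmin_l].
  - rewrite snd_Cminus. apply P2. eapply Rlt_le_trans; [exact Hu| apply Rmin_r].
Qed.

Lemma gam_per_Z (k : Z) s : gam (s + IZR k) = gam s.
Proof.
  destruct Hgam as [Hp _].
  revert s. induction k using Z.peano_ind; intros s.
  - rewrite Rplus_0_r; auto.
  - unfold Z.succ. rewrite plus_IZR, <- Rplus_assoc, Hp. auto.
  - rewrite <- (IHk s). unfold Z.pred. rewrite plus_IZR.
    replace (s + IZR k) with ((s + (IZR k + IZR (-1))) + 1) by (simpl; ring).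
    rewrite Hp. auto.
Qed.

Lemma IZR_close_eq a b : -1 < IZR a - IZR b < 1 -> a = b.
Proof.
  intros [H1 H2]. rewrite <- minus_IZR in H1, H2.
  apply lt_IZR in H1. apply lt_IZR in H2. lia.
Qed.

Lemma frac_in s : 0 <= s - IZR (Int_part s) < 1.
Proof. destruct (base_Int_part s). lra. Qed.

Lemma gam_eq_Z s s' : gam s = gam s' -> exists k, s' = s + IZR k.
Proof.
  intros H. destruct Hgam as [_ [_ [_ [_ Hinj]]]].
  set (k1 := Int_part s). set (k2 := Int_part s').
  assert (F1 := frac_in s). assert (F2 := frac_in s').
  assert (E1 : gam s = gam (s - IZR k1)).
  { rewrite <- (gam_per_Z k1 (s - IZR k1)). f_equal. ring. }
  assert (E2 : gam s' = gam (s' - IZR k2)).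
  { rewrite <- (gam_per_Z k2 (s' - IZR k2)). f_equal. ring. }
  assert (s - IZR k1 = s' - IZR k2) by (apply Hinj; auto; congruence).
  exists (k2 - k1)%Z. rewrite minus_IZR. lra.
Qed.

Lemma gam_eq_close a b : gam a = gam b -> Rabs (a - b) < 1 -> a = b.
Proof.
  intros H Hab. destruct (gam_eq_Z _ _ H) as [k ->].
  assert (k = 0%Z).
  { apply IZR_close_eq. simpl. apply Rabs_def2 in Hab. lra. }
  subst. simpl. ring.
Qed.

Definition coord (sp : R) (x : C) : R :=
  epsilon (inhabits 0) (fun c => 0 <= c < 1 /\ gam (sp + c) = x).

Lemma coord_spec sp x : curve gam x -> 0 <= coord sp x < 1 /\ gam (sp + coord sp x) = x.
Proof.
  intros [s Hs]. unfold coord. apply epsilon_spec.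
  exists ((s - sp) - IZR (Int_part (s - sp))). split; [apply frac_in|].
  rewrite <- Hs. rewrite <- (gam_per_Z (Int_part (s - sp))). f_equal. ring.
Qed.

Lemma coord_unique sp x c : 0 <= c < 1 -> gam (sp + c) = x -> coord sp x = c.
Proof.
  intros Hc Hx. assert (curve gam x) by (exists (sp + c); auto).
  destruct (coord_spec sp x H) as [H1 H2].
  assert (sp + coord sp x = sp + c).
  { apply gam_eq_close. congruence. apply Rabs_def1; lra. }
  lra.
Qed.

Lemma coord_pos sp x : curve gam x -> x <> gam sp -> 0 < coord sp x.
Proof.
  intros Hx Hne. destruct (coord_spec sp x Hx) as [[H1 H1'] H2].
  destruct H1 as [H1|H1]; auto. exfalso. apply Hne. rewrite <- H2, <- H1. f_equal; ring.
Qed.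

Lemma coord_inj sp x y : curve gam x -> curve gam y -> coord sp x = coord sp y -> x = y.
Proof.
  intros Hx Hy E. destruct (coord_spec sp x Hx) as [_ H1].
  destruct (coord_spec sp y Hy) as [_ H2]. rewrite <- H1, <- H2, E. auto.
Qed.

Lemma pos_coord sp x y : curve gam x -> curve gam y -> x <> gam sp -> y <> gam sp ->
  (pos_ordered gam (gam sp) x y <-> coord sp x < coord sp y).
Proof.
  intros Hx Hy Nx Ny.
  destruct (coord_spec sp x Hx) as [[X1 X2] X3].
  destruct (coord_spec sp y Hy) as [[Y1 Y2] Y3].
  assert (px := coord_pos sp x Hx Nx). assert (py := coord_pos sp y Hy Ny).
  split.
  - intros [s1 [s2 [s3 [[L1 L2] [L3 [E1 [E2 E3]]]]]]].
    destruct (gam_eq_Z _ _ (eq_sym E1)) as [k1 K1].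
    rewrite <- X3 in E2. destruct (gam_eq_Z _ _ (eq_sym E2)) as [k2 K2].
    rewrite <- Y3 in E3. destruct (gam_eq_Z _ _ (eq_sym E3)) as [k3 K3].
    assert (k2 = k1) by (apply IZR_close_eq; lra).
    assert (k3 = k1) by (apply IZR_close_eq; lra).
    subst. lra.
  - intros Hlt. exists sp, (sp + coord sp x), (sp + coord sp y).
    repeat split; auto; lra.
Qed.

End Gam.

Lemma pos_rot gam x y z : jordan_smooth_param gam ->
  pos_ordered gam x y z -> pos_ordered gam y z x.
Proof.
  intros Hg [s1 [s2 [s3 [[L1 L2] [L3 [E1 [E2 E3]]]]]]].
  exists s2, s3, (s1 + 1). repeat split; try lra; auto.
  destruct Hg as [Hp _]. rewrite Hp. auto.
Qed.

Definition cvC (u : nat -> C) (Y : C) : Prop :=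
  forall eps, 0 < eps -> exists N, forall n, (N <= n)%nat -> Cmod (Cminus (u n) Y) < eps.

Lemma Cminus_diag (z : C) : Cminus z z = RtoC 0.
Proof. destruct z; unfold Cminus, Copp, Cplus, RtoC; simpl; f_equal; ring. Qed.

Lemma Cmod_diag (z : C) : Cmod (Cminus z z) = 0.
Proof. rewrite Cminus_diag. apply Cmod_0. Qed.

Lemma iter_fix (g : C -> C) p n : g p = p -> Nat.iter n g p = p.
Proof. intros H; induction n; simpl; auto. rewrite IHn; auto. Qed.

Lemma iter_stable (P : C -> Prop) (g : C -> C) n x :
  (forall y, P y -> P (g y)) -> P x -> P (Nat.iter n g x).
Proof. intros H Hx; induction n; simpl; auto. Qed.

Section Orbit.
Variable gam : R -> C.
Hypothesis Hgam : jordan_smooth_param gam.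
Variable sp : R.
Let p := gam sp.

Lemma seq_lim_gam (u : nat -> R) (L : R) : is_lim_seq u L -> cvC (fun n => gam (sp + u n)) (gam (sp + L)).
Proof.
  intros H eps He. destruct (gam_cont gam Hgam (sp + L) eps He) as [d [Hd Hc]].
  apply is_lim_seq_spec in H. hnf in H. destruct (H (mkposreal d Hd)) as [N HN].
  exists N. intros n Hn. apply Hc. simpl in HN.
  replace (sp + u n - (sp + L)) with (u n - L) by ring. apply HN; auto.
Qed.

Lemma orbit_conv (g : C -> C) :
  (forall x, curve gam x -> curve gam (g x)) ->
  (forall x, curve gam x -> x <> p -> g x <> p) -> g p = p ->
  (forall x y, curve gam x -> curve gam y -> x <> p -> y <> p ->
     coord gam sp x < coord gam sp y -> coord gam sp (g x) < coord gam sp (g y)) ->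
  forall t, curve gam t -> exists Y, curve gam Y /\ cvC (fun n => Nat.iter n g t) Y.
Proof.
  intros Hc Hn Hp Hm t Ht.
  destruct (classic (t = p)) as [->|Htp].
  { exists p. split; [exists sp; reflexivity|].
    intros eps He. exists O. intros n _. rewrite iter_fix; auto. rewrite Cmod_diag; auto. }
  set (x := fun n => Nat.iter n g t).
  assert (Xc : forall n, curve gam (x n)) by (intros; apply iter_stable; auto).
  assert (Xn : forall n, x n <> p).
  { induction n; simpl; auto. }
  assert (Wm : forall a b, curve gam a -> curve gam b -> a <> p -> b <> p ->
     coord gam sp a <= coord gam sp b -> coord gam sp (g a) <= coord gam sp (g b)).
  { intros a b Ha Hb Na Nb [Hl|He]. left; apply Hm; auto.
    right. rewrite (coord_inj gam Hgam sp a b Ha Hb He). auto. }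
  set (u := fun n => coord gam sp (x n)).
  assert (Ub : forall n, 0 <= u n <= 1).
  { intros n. destruct (coord_spec gam Hgam sp (x n) (Xc n)). unfold u. lra. }
  assert (Ux : forall n, x n = gam (sp + u n)).
  { intros n. destruct (coord_spec gam Hgam sp (x n) (Xc n)). unfold u. auto. }
  assert (Lim : exists L : R, is_lim_seq u L).
  { destruct (Rle_lt_dec (u 0%nat) (u 1%nat)) as [H01|H01].
    - assert (Inc : forall n, u n <= u (S n)).
      { induction n; auto. unfold u in *. simpl. apply Wm; auto; apply Xc || apply Xn. }
      destruct (ex_finite_lim_seq_incr u 1 Inc (fun n => proj2 (Ub n))) as [L HL].
      exists L; auto.
    - assert (Dec : forall n, u (S n) <= u n).
      { induction n; [lra|]. unfold u in *. simpl. apply Wm; auto; apply Xc || apply Xn. }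
      destruct (ex_finite_lim_seq_decr u 0 Dec (fun n => proj1 (Ub n))) as [L HL].
      exists L; auto. }
  destruct Lim as [L HL]. exists (gam (sp + L)). split; [exists (sp + L); auto|].
  intros eps He. destruct (seq_lim_gam u L HL eps He) as [N HN]. exists N.
  intros n Hnn. change (Nat.iter n g t) with (x n). rewrite Ux. apply HN; auto.
Qed.

Lemma inv_mono (g gi : C -> C) :
  (forall x, curve gam x -> curve gam (gi x)) ->
  (forall x, curve gam x -> g (gi x) = x) -> g p = p ->
  (forall x, curve gam x -> curve gam (g x)) ->
  (forall x y, curve gam x -> curve gam y -> x <> p -> y <> p ->
     coord gam sp x < coord gam sp y -> coord gam sp (g x) < coord gam sp (g y)) ->
  (forall x, curve gam x -> x <> p -> gi x <> p) /\
  (forall x y, curve gam x -> curve gam y -> x <> p -> y <> p ->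
     coord gam sp x < coord gam sp y -> coord gam sp (gi x) < coord gam sp (gi y)).
Proof.
  intros Hic Hgi Hp Hc Hm.
  assert (N : forall x, curve gam x -> x <> p -> gi x <> p).
  { intros x Hx Nx E. apply Nx. rewrite <- (Hgi x Hx), E. auto. }
  split; auto.
  intros x y Hx Hy Nx Ny Hlt.
  destruct (Rtotal_order (coord gam sp (gi x)) (coord gam sp (gi y))) as [H|[H|H]]; auto.
  - apply coord_inj in H; auto. assert (x = y).
    { rewrite <- (Hgi x Hx), <- (Hgi y Hy), H. auto. }
    subst; lra.
  - apply Hm in H; auto. rewrite !Hgi in H; auto. lra.
Qed.

End Orbit.

Definition ctsw (D : C -> Prop) (f : C -> C) (t : C) : Prop :=
  forall eps, 0 < eps -> exists d, 0 < d /\ forall y, D y -> Cmod (Cminus y t) < d ->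
    Cmod (Cminus (f y) (f t)) < eps.

Definition derw (D : C -> Prop) (f : C -> C) (t dv : C) : Prop :=
  forall eps, 0 < eps -> exists d, 0 < d /\ forall y, D y -> y <> t -> Cmod (Cminus y t) < d ->
    Cmod (Cminus (Cdiv (Cminus (f y) (f t)) (Cminus y t)) dv) < eps.

Lemma within_eps (D : C -> Prop) (f : C -> C) t l :
  filterlim f (within D (locally t)) (locally l) <->
  forall eps, 0 < eps -> exists d, 0 < d /\ forall y, D y -> Cmod (Cminus y t) < d ->
    Cmod (Cminus (f y) l) < eps.
Proof.
  pose proof sqrt2_lt2 as S2. assert (S0 : 0 <= sqrt 2) by apply sqrt_pos.
  split.
  - intros H eps He.
    assert (He2 : 0 < eps / 2) by lra.
    assert (LP : locally l (ball l (mkposreal _ He2))) by (exists (mkposreal _ He2); auto).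
    destruct (H _ LP) as [d Hd].
    exists (d / 2). split; [destruct d; simpl; lra|].
    intros y Dy Hy.
    assert (B : ball t d y).
    { apply (ball_le t (d/2)); [destruct d; simpl; lra|].
      apply C_NormedModule_mixin_compat1. exact Hy. }
    specialize (Hd y B Dy).
    apply (C_NormedModule_mixin_compat2 l (f y) (mkposreal _ He2)) in Hd.
    simpl in Hd. change (Cmod (Cminus (f y) l) < sqrt 2 * (eps / 2)) in Hd.
    assert (sqrt 2 * (eps/2) <= 2 * (eps/2)) by (apply Rmult_le_compat_r; lra). lra.
  - intros H P [eps HP].
    destruct (H eps (cond_pos eps)) as [d [Hd Hy]].
    assert (Hd2 : 0 < d / 2) by lra.
    exists (mkposreal _ Hd2). intros y By Dy. apply HP.
    apply C_NormedModule_mixin_compat1. apply Hy; auto.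
    apply (C_NormedModule_mixin_compat2 t y (mkposreal _ Hd2)) in By. simpl in By.
    change (Cmod (Cminus y t) < sqrt 2 * (d / 2)) in By.
    assert (sqrt 2 * (d/2) <= 2 * (d/2)) by (apply Rmult_le_compat_r; lra). lra.
Qed.

Lemma curve_deriv_derw G f t dv : curve_deriv G f t dv <-> derw G f t dv.
Proof.
  unfold curve_deriv, derw. rewrite within_eps. split;
  intros H eps He; destruct (H eps He) as [d [Hd H2]]; exists d; split; auto;
  intros y; try (intros [Gy Ny]); intros; apply H2; auto.
Qed.

Lemma cont_on_ctsw G f : cont_on G f -> forall t, G t -> ctsw G f t.
Proof.
  intros H t Gt. specialize (H t Gt). rewrite within_eps in H. exact H.
Qed.

Lemma Cminus_neq0 (y t : C) : y <> t -> Cminus y t <> RtoC 0.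
Proof.
  intros H E. apply H. replace y with (Cplus (Cminus y t) t) by ring. rewrite E. ring.
Qed.

Lemma Cminus_eq0 (y t : C) : Cmod (Cminus y t) = 0 -> y = t.
Proof.
  intros H. apply Cmod_eq_0 in H. replace y with (Cplus (Cminus y t) t) by ring. rewrite H. ring.
Qed.

Lemma derw_ctsw G f t dv : derw G f t dv -> ctsw G f t.
Proof.
  intros H eps He. destruct (H 1 Rlt_0_1) as [d [Hd H2]].
  assert (P : 0 < Cmod dv + 1) by (pose proof (Cmod_ge_0 dv); lra).
  exists (Rmin d (eps / (Cmod dv + 1))). split.
  { apply Rmin_glb_lt; auto. apply Rdiv_lt_0_compat; auto. }
  intros y Gy Hy. destruct (classic (y = t)) as [->|Nyt].
  { rewrite Cmod_diag; auto. }
  assert (Hy1 : Cmod (Cminus y t) < d) by (eapply Rlt_le_trans; [exact Hy| apply Rmin_l]).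
  assert (Hy2 : Cmod (Cminus y t) < eps / (Cmod dv + 1)) by (eapply Rlt_le_trans; [exact Hy| apply Rmin_r]).
  specialize (H2 y Gy Nyt Hy1).
  set (Q := Cdiv (Cminus (f y) (f t)) (Cminus y t)) in *.
  assert (E : Cminus (f y) (f t) = Cmult Q (Cminus y t)).
  { unfold Q. field. apply Cminus_neq0; auto. }
  rewrite E, Cmod_mult.
  assert (CQ : Cmod Q <= Cmod dv + 1).
  { pose proof (Cmod_tri3 Q dv (RtoC 0)). rewrite Cmod_sub_sym in H2.
    replace (Cminus Q (RtoC 0)) with Q in H0 by ring.
    replace (Cminus dv (RtoC 0)) with dv in H0 by ring.
    rewrite Cmod_sub_sym in H2. lra. }
  pose proof (Cmod_ge_0 Q). pose proof (Cmod_ge_0 (Cminus y t)).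
  apply Rle_lt_trans with ((Cmod dv + 1) * Cmod (Cminus y t)).
  { apply Rmult_le_compat_r; auto. }
  apply Rmult_lt_compat_l with (r := Cmod dv + 1) in Hy2; auto.
  replace ((Cmod dv + 1) * (eps / (Cmod dv + 1))) with eps in Hy2 by (field; lra). lra.
Qed.

Lemma ctsw_comp G f g t : (forall y, G y -> G (g y)) -> ctsw G g t -> ctsw G f (g t) ->
  ctsw G (fun y => f (g y)) t.
Proof.
  intros Hg Cg Cf eps He. destruct (Cf eps He) as [d1 [Hd1 H1]].
  destruct (Cg d1 Hd1) as [d2 [Hd2 H2]]. exists d2; split; auto.
Qed.

Lemma ctsw_id G t : ctsw G (fun y => y) t.
Proof. intros eps He. exists eps; split; auto. Qed.

Lemma Qprod_bound (Qf Qg d1 d2 : C) e1 e2 :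
  Cmod (Cminus Qf d2) < e2 -> Cmod (Cminus Qg d1) < e1 -> e1 <= 1 ->
  Cmod (Cminus (Cmult Qf Qg) (Cmult d2 d1)) < e2 * (Cmod d1 + 1) + Cmod d2 * e1 + e1 * 0.
Proof.
  intros H1 H2 He1.
  replace (Cminus (Cmult Qf Qg) (Cmult d2 d1)) with
    (Cplus (Cmult (Cminus Qf d2) Qg) (Cmult d2 (Cminus Qg d1))) by ring.
  eapply Rle_lt_trans; [apply Cmod_triangle|]. rewrite !Cmod_mult.
  assert (CQ : Cmod Qg <= Cmod d1 + 1).
  { pose proof (Cmod_tri3 Qg d1 (RtoC 0)).
    replace (Cminus Qg (RtoC 0)) with Qg in H by ring.
    replace (Cminus d1 (RtoC 0)) with d1 in H by ring. lra. }
  pose proof (Cmod_ge_0 Qg). pose proof (Cmod_ge_0 d2). pose proof (Cmod_ge_0 (Cminus Qf d2)).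
  pose proof (Cmod_ge_0 (Cminus Qg d1)).
  assert (Cmod (Cminus Qf d2) * Cmod Qg <= Cmod (Cminus Qf d2) * (Cmod d1 + 1))
    by (apply Rmult_le_compat_l; auto).
  assert (Cmod (Cminus Qf d2) * (Cmod d1 + 1) < e2 * (Cmod d1 + 1)).
  { apply Rmult_lt_compat_r; auto. pose proof (Cmod_ge_0 d1); lra. }
  assert (Cmod d2 * Cmod (Cminus Qg d1) <= Cmod d2 * e1) by (apply Rmult_le_compat_l; lra).
  lra.
Qed.

Lemma derw_chain G f g t d1 d2 :
  (forall y, G y -> G (g y)) -> (forall y, G y -> y <> t -> g y <> g t) ->
  derw G g t d1 -> derw G f (g t) d2 -> ctsw G g t ->
  derw G (fun y => f (g y)) t (Cmult d2 d1).
Proof.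
  intros Hg Hi Dg Df Cg eps He.
  pose proof (Cmod_ge_0 d1) as P1. pose proof (Cmod_ge_0 d2) as P2.
  set (e1 := Rmin 1 (eps / (2 * (Cmod d2 + 1)))).
  set (e2 := eps / (2 * (Cmod d1 + 1))).
  assert (E1p : 0 < e1). { apply Rmin_glb_lt; [lra|]. apply Rdiv_lt_0_compat; lra. }
  assert (E2p : 0 < e2) by (apply Rdiv_lt_0_compat; lra).
  destruct (Dg e1 E1p) as [da [Hda Ha]].
  destruct (Df e2 E2p) as [db [Hdb Hb]].
  destruct (Cg db Hdb) as [dc [Hdc Hc]].
  exists (Rmin da dc). split; [apply Rmin_glb_lt; auto|].
  intros y Gy Ny Hy.
  assert (Hya : Cmod (Cminus y t) < da) by (eapply Rlt_le_trans; [exact Hy| apply Rmin_l]).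
  assert (Hyc : Cmod (Cminus y t) < dc) by (eapply Rlt_le_trans; [exact Hy| apply Rmin_r]).
  assert (Ng := Hi y Gy Ny).
  specialize (Ha y Gy Ny Hya). specialize (Hb (g y) (Hg y Gy) Ng (Hc y Gy Hyc)).
  replace (Cdiv (Cminus (f (g y)) (f (g t))) (Cminus y t)) with
    (Cmult (Cdiv (Cminus (f (g y)) (f (g t))) (Cminus (g y) (g t)))
           (Cdiv (Cminus (g y) (g t)) (Cminus y t))).
  2:{ field. split; apply Cminus_neq0; auto. }
  eapply Rlt_le_trans; [apply (Qprod_bound _ _ _ _ e1 e2 Hb Ha (Rmin_l _ _))|].
  rewrite Rmult_0_r, Rplus_0_r.
  assert (e2 * (Cmod d1 + 1) = eps / 2) by (unfold e2; field; lra).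
  assert (Cmod d2 * e1 <= eps / 2).
  { apply Rle_trans with (Cmod d2 * (eps / (2 * (Cmod d2 + 1)))).
    apply Rmult_le_compat_l; auto; apply Rmin_r.
    apply Rle_trans with ((Cmod d2 + 1) * (eps / (2 * (Cmod d2 + 1)))).
    apply Rmult_le_compat_r; [apply Rlt_le, Rdiv_lt_0_compat; lra| lra].
    right; field; lra. }
  lra.
Qed.

Lemma derw_id G t : derw G (fun y => y) t (RtoC 1).
Proof.
  intros eps He. exists 1; split; [lra|]. intros y Gy Ny Hy.
  replace (Cdiv (Cminus y t) (Cminus y t)) with (RtoC 1).
  2:{ field. apply Cminus_neq0; auto. }
  rewrite Cmod_diag; auto.
Qed.

Lemma derw_unique G f t d d' :
  (forall e, 0 < e -> exists y, G y /\ y <> t /\ Cmod (Cminus y t) < e) ->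
  derw G f t d -> derw G f t d' -> d = d'.
Proof.
  intros Hacc H1 H2. apply Cminus_eq0.
  destruct (Req_dec (Cmod (Cminus d d')) 0) as [E|E]; auto. exfalso.
  assert (P : 0 < Cmod (Cminus d d') / 2) by (pose proof (Cmod_ge_0 (Cminus d d')); lra).
  destruct (H1 _ P) as [a [Ha A]]. destruct (H2 _ P) as [b [Hb B]].
  destruct (Hacc (Rmin a b)) as [y [Gy [Ny Hy]]]; [apply Rmin_glb_lt; auto|].
  specialize (A y Gy Ny (Rlt_le_trans _ _ _ Hy (Rmin_l _ _))).
  specialize (B y Gy Ny (Rlt_le_trans _ _ _ Hy (Rmin_r _ _))).
  set (Q := Cdiv (Cminus (f y) (f t)) (Cminus y t)) in *.
  pose proof (Cmod_tri3 d Q d'). rewrite (Cmod_sub_sym d Q) in H. lra.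
Qed.

Lemma curve_acc gam : jordan_smooth_param gam -> forall t, curve gam t ->
  forall e, 0 < e -> exists y, curve gam y /\ y <> t /\ Cmod (Cminus y t) < e.
Proof.
  intros Hg t [s <-] e He. destruct (gam_cont gam Hg s e He) as [d [Hd H]].
  set (h := Rmin (d/2) (1/2)).
  assert (0 < h) by (apply Rmin_glb_lt; lra).
  assert (h <= d/2) by apply Rmin_l. assert (h <= 1/2) by apply Rmin_r.
  exists (gam (s + h)). split; [exists (s + h); auto|]. split.
  - intros E. apply gam_eq_close in E; auto. lra. rewrite Rabs_right; lra.
  - apply H. replace (s + h - s) with h by ring. rewrite Rabs_right; lra.
Qed.

Section Iter.
Variable G : C -> Prop.
Variable alpha : C -> C.
Variable d1 : C -> C.
Hypothesis HG : forall y, G y -> G (alpha y).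
Hypothesis Hinj : forall x y, G x -> G y -> alpha x = alpha y -> x = y.
Hypothesis Hd : forall y, G y -> derw G alpha y (d1 y).

Lemma iter_G n y : G y -> G (Nat.iter n alpha y).
Proof. intros; apply iter_stable; auto. Qed.

Lemma iter_inj n x y : G x -> G y -> Nat.iter n alpha x = Nat.iter n alpha y -> x = y.
Proof.
  induction n; simpl; auto. intros Gx Gy E. apply IHn; auto.
  apply Hinj; auto; apply iter_G; auto.
Qed.

Lemma iter_ctsw n t : G t -> ctsw G (Nat.iter n alpha) t.
Proof.
  intros Gt. induction n.
  - apply ctsw_id.
  - apply (ctsw_comp G alpha (Nat.iter n alpha) t); auto.
    intros; apply iter_G; auto. apply derw_ctsw with (d1 (Nat.iter n alpha t)).
    apply Hd, iter_G; auto.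
Qed.

Lemma iter_derw n t : G t -> derw G (Nat.iter n alpha) t (fm d1 alpha n t).
Proof.
  intros Gt. induction n.
  - apply derw_id.
  - simpl. rewrite Cmult_comm.
    apply (derw_chain G alpha (Nat.iter n alpha) t); auto.
    + intros; apply iter_G; auto.
    + intros y Gy Ny E. apply Ny. apply (iter_inj n); auto.
    + apply Hd, iter_G; auto.
    + apply iter_ctsw; auto.
Qed.

End Iter.

Lemma cvC_ctsw G f (y : nat -> C) Y : (forall n, G (y n)) -> cvC y Y -> ctsw G f Y ->
  cvC (fun n => f (y n)) (f Y).
Proof.
  intros Gy Hy Hf eps He. destruct (Hf eps He) as [d [Hd H]].
  destruct (Hy d Hd) as [N HN]. exists N. intros n Hn. apply H; auto.
Qed.

Lemma cvC_const (c : C) : cvC (fun _ => c) c.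
Proof. intros eps He. exists O. intros. rewrite Cmod_diag; auto. Qed.

Lemma cvC_mult u v U V : cvC u U -> cvC v V -> cvC (fun n => Cmult (u n) (v n)) (Cmult U V).
Proof.
  intros Hu Hv eps He.
  pose proof (Cmod_ge_0 U) as P1. pose proof (Cmod_ge_0 V) as P2.
  set (e1 := Rmin 1 (eps / (2 * (Cmod U + 1)))).
  set (e2 := eps / (2 * (Cmod V + 1))).
  assert (E1p : 0 < e1). { apply Rmin_glb_lt; [lra|]. apply Rdiv_lt_0_compat; lra. }
  assert (E2p : 0 < e2) by (apply Rdiv_lt_0_compat; lra).
  destruct (Hu e2 E2p) as [N1 H1]. destruct (Hv e1 E1p) as [N2 H2].
  exists (max N1 N2). intros n Hn.
  eapply Rlt_le_trans; [apply (Qprod_bound _ _ _ _ e1 e2 (H1 n ltac:(lia)) (H2 n ltac:(lia)) (Rmin_l _ _))|].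
  rewrite Rmult_0_r, Rplus_0_r.
  assert (e2 * (Cmod V + 1) = eps / 2) by (unfold e2; field; lra).
  assert (Cmod U * e1 <= eps / 2).
  { apply Rle_trans with (Cmod U * (eps / (2 * (Cmod U + 1)))).
    apply Rmult_le_compat_l; auto; apply Rmin_r.
    apply Rle_trans with ((Cmod U + 1) * (eps / (2 * (Cmod U + 1)))).
    apply Rmult_le_compat_r; [apply Rlt_le, Rdiv_lt_0_compat; lra| lra].
    right; field; lra. }
  lra.
Qed.

Lemma cvC_Cmod u U : cvC u U -> is_lim_seq (fun n => Cmod (u n)) (Cmod U).
Proof.
  intros H. apply is_lim_seq_spec. intros eps. destruct (H eps (cond_pos eps)) as [N HN].
  exists N. intros n Hn. specialize (HN n Hn).
  pose proof (Cmod_tri3 (u n) U (RtoC 0)). pose proof (Cmod_tri3 U (u n) (RtoC 0)).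
  replace (Cminus (u n) (RtoC 0)) with (u n) in * by ring.
  replace (Cminus U (RtoC 0)) with U in * by ring.
  rewrite Cmod_sub_sym in H1. apply Rabs_def1; lra.
Qed.

Lemma cvC_unique u Y Y' : cvC u Y -> cvC u Y' -> Y = Y'.
Proof.
  intros H1 H2. apply Cminus_eq0.
  destruct (Req_dec (Cmod (Cminus Y Y')) 0) as [E|E]; auto. exfalso.
  assert (P : 0 < Cmod (Cminus Y Y') / 2) by (pose proof (Cmod_ge_0 (Cminus Y Y')); lra).
  destruct (H1 _ P) as [N1 A]. destruct (H2 _ P) as [N2 B].
  specialize (A (max N1 N2) ltac:(lia)). specialize (B (max N1 N2) ltac:(lia)).
  pose proof (Cmod_tri3 Y (u (max N1 N2)) Y'). rewrite (Cmod_sub_sym Y (u (max N1 N2))) in H. lra.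
Qed.

Lemma cvC_shift u Y : cvC u Y -> cvC (fun n => u (S n)) Y.
Proof.
  intros H eps He. destruct (H eps He) as [N HN]. exists N. intros n Hn. apply HN. lia.
Qed.

Lemma Rmin_form x y : Rmin x y = (x + y - Rabs (x - y)) / 2.
Proof. unfold Rmin. destruct (Rle_dec x y); [rewrite Rabs_left1 | rewrite Rabs_right]; lra. Qed.
Lemma Rmax_form x y : Rmax x y = (x + y + Rabs (x - y)) / 2.
Proof. unfold Rmax. destruct (Rle_dec x y); [rewrite Rabs_left1 | rewrite Rabs_right]; lra. Qed.

Definition Rsel (i : nat) (x y : R) : R := match i with O => Rmin x y | _ => Rmax x y end.

Lemma Rsel_lim i u v (U V : R) : is_lim_seq u U -> is_lim_seq v V ->
  is_lim_seq (fun n => Rsel i (u n) (v n)) (Rsel i U V).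
Proof.
  intros Hu Hv.
  assert (Hd : is_lim_seq (fun n => Rabs (u n - v n)) (Rabs (U - V))).
  { apply (is_lim_seq_abs _ (U - V)). apply (is_lim_seq_minus' _ _ U V); auto. }
  assert (Hs : is_lim_seq (fun n => u n + v n) (U + V)) by (apply is_lim_seq_plus'; auto).
  destruct i; simpl.
  - rewrite Rmin_form. apply is_lim_seq_ext with (fun n => (u n + v n - Rabs (u n - v n)) / 2).
    { intros; rewrite Rmin_form; auto. }
    apply (is_lim_seq_mult' _ (fun _ => / 2) (U + V - Rabs (U - V)) (/ 2)); [|apply is_lim_seq_const].
    apply is_lim_seq_minus'; auto.
  - rewrite Rmax_form. apply is_lim_seq_ext with (fun n => (u n + v n + Rabs (u n - v n)) / 2).
    { intros; rewrite Rmax_form; auto. }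
    apply (is_lim_seq_mult' _ (fun _ => / 2) (U + V + Rabs (U - V)) (/ 2)); [|apply is_lim_seq_const].
    apply is_lim_seq_plus'; auto.
Qed.

Lemma Rpower_lim u (U : R) c : 0 < U -> is_lim_seq u U -> is_lim_seq (fun n => Rpower (u n) c) (Rpower U c).
Proof.
  intros HU Hu. apply (is_lim_seq_continuous (fun x => Rpower x c)); auto.
  apply derivable_continuous_pt. exists (c * Rpower U (c - 1)). apply derivable_pt_lim_power; auto.
Qed.

Lemma eta_form i a b alpha dm m aX bX t :
  eta i a b alpha dm m aX bX t = Cmod (fm a alpha m t) - Cmod (fm b alpha m t) *
    Rsel i (Rpower (Cmod (dm t)) (- aX)) (Rpower (Cmod (dm t)) (- bX)).
Proof. destruct i; reflexivity. Qed.

Lemma iter_shift (f : C -> C) n t : Nat.iter n f (f t) = f (Nat.iter n f t).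
Proof. induction n; simpl; auto. rewrite IHn; auto. Qed.

Lemma fm_shift f alpha n t :
  Cmult (fm f alpha n (alpha t)) (f t) = Cmult (fm f alpha n t) (f (Nat.iter n alpha t)).
Proof.
  induction n; simpl.
  - ring.
  - rewrite iter_shift.
    replace (Cmult (Cmult (fm f alpha n (alpha t)) (f (alpha (Nat.iter n alpha t)))) (f t))
      with (Cmult (Cmult (fm f alpha n (alpha t)) (f t)) (f (alpha (Nat.iter n alpha t)))) by ring.
    rewrite IHn. ring.
Qed.

Lemma fm_zero f alpha n t : f t = RtoC 0 -> (1 <= n)%nat -> fm f alpha n t = RtoC 0.
Proof.
  intros Hf Hn. induction n; [lia|]. simpl.
  destruct n.
  - simpl. rewrite Hf. ring.
  - rewrite IHn by lia. ring.
Qed.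

Lemma fm_cyc f alpha m Y : (1 <= m)%nat -> Nat.iter m alpha Y = Y ->
  fm f alpha m (alpha Y) = fm f alpha m Y.
Proof.
  intros Hm HY. destruct (classic (f Y = RtoC 0)) as [Z|Z].
  - rewrite (fm_zero f alpha m Y Z Hm).
    destruct m; [lia|]. simpl. rewrite iter_shift.
    change (alpha (Nat.iter m alpha Y)) with (Nat.iter (S m) alpha Y). rewrite HY, Z. ring.
  - pose proof (fm_shift f alpha m Y) as E. rewrite HY in E.
    replace (fm f alpha m (alpha Y)) with (Cdiv (Cmult (fm f alpha m (alpha Y)) (f Y)) (f Y)) by (field; auto).
    rewrite E. field; auto.
Qed.

Section EtaLim.
Variable G : C -> Prop.
Variables (alpha d1 a b dm : C -> C) (m : nat) (aX bX : R).
Hypothesis HG : forall y, G y -> G (alpha y).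
Hypothesis Hca : forall y, G y -> ctsw G alpha y.
Hypothesis Ha : forall y, G y -> ctsw G a y.
Hypothesis Hb : forall y, G y -> ctsw G b y.
Hypothesis Hd1 : forall y, G y -> ctsw G d1 y.
Hypothesis Hd1n : forall y, G y -> d1 y <> RtoC 0.
Hypothesis Hdm : forall y, G y -> dm y = fm d1 alpha m y.

Definition Etgt (i : nat) (Y : C) : R :=
  Cmod (fm a alpha m Y) - Cmod (fm b alpha m Y) *
    Rsel i (Rpower (Cmod (fm d1 alpha m Y)) (- aX)) (Rpower (Cmod (fm d1 alpha m Y)) (- bX)).

Lemma iter_ctsw' n y : G y -> ctsw G (Nat.iter n alpha) y.
Proof.
  intros Gy. induction n.
  - apply ctsw_id.
  - apply (ctsw_comp G alpha (Nat.iter n alpha) y); auto.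
    intros; apply iter_stable; auto. apply Hca, iter_stable; auto.
Qed.

Lemma fm_cv f (y : nat -> C) Y n : (forall z, G z -> ctsw G f z) ->
  (forall k, G (y k)) -> G Y -> cvC y Y -> cvC (fun k => fm f alpha n (y k)) (fm f alpha n Y).
Proof.
  intros Hf Gy GY Hy. induction n; simpl.
  - apply cvC_const.
  - apply cvC_mult; auto.
    apply (cvC_ctsw G (fun z => f (Nat.iter n alpha z))); auto.
    apply (ctsw_comp G f (Nat.iter n alpha)); auto.
    intros; apply iter_stable; auto. apply iter_ctsw'; auto.
    apply Hf, iter_stable; auto.
Qed.

Lemma fm_nz n Y : G Y -> fm d1 alpha n Y <> RtoC 0.
Proof.
  intros GY. induction n; simpl.
  - intros E. apply RtoC_inj in E. lra.
  - apply Cmult_neq_0; auto. apply Hd1n, iter_stable; auto.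
Qed.

Lemma eta_lim i (y : nat -> C) Y : (forall k, G (y k)) -> G Y -> cvC y Y ->
  is_lim_seq (fun k => eta i a b alpha dm m aX bX (y k)) (Etgt i Y).
Proof.
  intros Gy GY Hy.
  apply is_lim_seq_ext with (fun k => Cmod (fm a alpha m (y k)) - Cmod (fm b alpha m (y k)) *
    Rsel i (Rpower (Cmod (fm d1 alpha m (y k))) (- aX)) (Rpower (Cmod (fm d1 alpha m (y k))) (- bX))).
  { intros k. rewrite eta_form, Hdm; auto. }
  unfold Etgt.
  assert (P : 0 < Cmod (fm d1 alpha m Y)).
  { destruct (Cmod_ge_0 (fm d1 alpha m Y)) as [H|H]; auto.
    exfalso. apply (fm_nz m Y GY). apply Cmod_eq_0. auto. }
  assert (L1 := cvC_Cmod _ _ (fm_cv a y Y m Ha Gy GY Hy)).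
  assert (L2 := cvC_Cmod _ _ (fm_cv b y Y m Hb Gy GY Hy)).
  assert (L3 := cvC_Cmod _ _ (fm_cv d1 y Y m Hd1 Gy GY Hy)).
  apply (is_lim_seq_minus' _ _ (Cmod (fm a alpha m Y))); auto.
  apply (is_lim_seq_mult' _ _ (Cmod (fm b alpha m Y))); auto.
  apply Rsel_lim; apply Rpower_lim; auto.
Qed.

Lemma Etgt_cyc i Y : (1 <= m)%nat -> Nat.iter m alpha Y = Y -> Etgt i (alpha Y) = Etgt i Y.
Proof.
  intros Hm HY. unfold Etgt. rewrite !fm_cyc; auto.
Qed.

End EtaLim.

Lemma Cmod_rev (a b z : C) : Rabs (Cmod (Cminus a z) - Cmod (Cminus b z)) <= Cmod (Cminus a b).
Proof.
  pose proof (Cmod_tri3 a b z). pose proof (Cmod_tri3 b a z).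
  rewrite (Cmod_sub_sym b a) in H0. apply Rabs_le. lra.
Qed.

Section Rev.
Variable gam : R -> C.
Hypothesis Hgam : jordan_smooth_param gam.
Let G := curve gam.

Lemma gam_coord0 u : 0 <= u < 1 -> coord gam 0 (gam u) = u.
Proof. intros Hu. apply coord_unique; auto. f_equal; ring. Qed.

Lemma gam_coord0' y : G y -> gam (coord gam 0 y) = y.
Proof.
  intros Gy. destruct (coord_spec gam Hgam 0 y Gy) as [_ H]. rewrite <- (Rplus_0_l (coord gam 0 y)). exact H.
Qed.

Lemma gam_ne_q0 u : 0 < u < 1 -> gam u <> gam 0.
Proof.
  intros Hu E. apply gam_eq_close in E; auto. lra. rewrite Rminus_0_r, Rabs_right; lra.
Qed.

Lemma sep z a b : (forall u, a <= u <= b -> gam u <> z) ->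
  exists M, 0 < M /\ forall u, a <= u <= b -> M <= Cmod (Cminus (gam u) z).
Proof.
  intros H. destruct (Rle_lt_dec a b) as [Hab|Hab].
  2:{ exists 1. split; [lra|]. intros; lra. }
  set (phi := fun u => Cmod (Cminus (gam u) z)).
  assert (Cp : forall c, continuity_pt phi c).
  { intros c. apply eps_cont_pt. intros eps He.
    destruct (gam_cont gam Hgam c eps He) as [d [Hd Hc]]. exists d; split; auto.
    intros y Hy. eapply Rle_lt_trans; [apply Cmod_rev| apply Hc; auto]. }
  destruct (continuity_ab_min phi a b Hab (fun c _ => Cp c)) as [mx [Hmx Hmx2]].
  exists (phi mx). split.
  - destruct (Cmod_ge_0 (Cminus (gam mx) z)) as [P|P]; auto.
    exfalso. apply (H mx Hmx2). apply Cminus_eq0. auto.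
  - intros u Hu. apply Hmx; auto.
Qed.

Lemma coord_cont z : G z -> z <> gam 0 -> forall eps, 0 < eps -> exists d, 0 < d /\
  forall y, G y -> y <> gam 0 -> Cmod (Cminus y z) < d ->
  Rabs (coord gam 0 y - coord gam 0 z) < eps.
Proof.
  intros Gz Nz eps He.
  set (cz := coord gam 0 z).
  assert (Hcz : 0 <= cz < 1) by (apply (coord_spec gam Hgam 0 z Gz)).
  assert (Ez : gam cz = z) by (apply gam_coord0'; auto).
  assert (NE : forall u, 0 <= u <= 1 -> Rabs (u - cz) >= eps -> gam u <> z).
  { intros u Hu Hd E. destruct (Req_dec u 1) as [->|N1].
    - apply Nz. rewrite <- E. replace 1 with (0 + 1) by ring. destruct Hgam as [Hp _]. apply Hp.
    - assert (coord gam 0 z = u) by (rewrite <- E; apply gam_coord0; lra).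
      fold cz in H. rewrite H in Hd. rewrite Rminus_diag, Rabs_R0 in Hd. lra. }
  destruct (sep z 0 (cz - eps)) as [M1 [HM1 P1]].
  { intros u Hu. apply NE. lra. rewrite Rabs_left; lra. }
  destruct (sep z (cz + eps) 1) as [M2 [HM2 P2]].
  { intros u Hu. apply NE. lra. rewrite Rabs_right; lra. }
  exists (Rmin M1 M2). split; [apply Rmin_glb_lt; auto|].
  intros y Gy Ny Hy. fold cz.
  destruct (coord_spec gam Hgam 0 y Gy) as [Hcy _].
  assert (Ey := gam_coord0' y Gy).
  destruct (Rlt_le_dec (Rabs (coord gam 0 y - cz)) eps) as [L|L]; auto.
  exfalso. destruct (Rle_lt_dec (coord gam 0 y) cz) as [C1|C1].
  - rewrite Rabs_left1 in L by lra.
    specialize (P1 (coord gam 0 y) ltac:(lra)). rewrite Ey in P1.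
    pose proof (Rmin_l M1 M2). lra.
  - rewrite Rabs_right in L by lra.
    specialize (P2 (coord gam 0 y) ltac:(lra)). rewrite Ey in P2.
    pose proof (Rmin_r M1 M2). lra.
Qed.

Lemma near_q0 d0 : 0 < d0 < 1/2 -> exists e, 0 < e /\
  forall y, G y -> y <> gam 0 -> Cmod (Cminus y (gam 0)) < e ->
  coord gam 0 y < d0 \/ coord gam 0 y > 1 - d0.
Proof.
  intros Hd0. destruct (sep (gam 0) d0 (1 - d0)) as [M [HM P]].
  { intros u Hu. apply gam_ne_q0. lra. }
  exists M. split; auto. intros y Gy Ny Hy.
  destruct (coord_spec gam Hgam 0 y Gy) as [Hcy _].
  destruct (Rlt_le_dec (coord gam 0 y) d0) as [L|L]; auto.
  destruct (Rle_lt_dec (coord gam 0 y) (1 - d0)) as [L2|L2]; auto.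
  exfalso. specialize (P (coord gam 0 y) ltac:(lra)). rewrite gam_coord0' in P; auto. lra.
Qed.

Definition clamp (a b u : R) := Rmax a (Rmin b u).

Lemma clamp_lip a b x y : a <= b -> Rabs (clamp a b x - clamp a b y) <= Rabs (x - y).
Proof.
  intros Hab. unfold clamp, Rmax, Rmin.
  destruct (Rle_dec b x); destruct (Rle_dec b y);
  repeat match goal with |- context [Rle_dec ?p ?q] => destruct (Rle_dec p q) end;
  apply Rabs_le; pose proof (Rle_abs (x - y)); pose proof (Rle_abs (- (x - y)));
  rewrite Rabs_Ropp in *; lra.
Qed.

Lemma clamp_in a b u : a <= b -> a <= clamp a b u <= b.
Proof.
  intros Hab. unfold clamp, Rmin. destruct (Rle_dec b u); unfold Rmax;
  match goal with |- context [Rle_dec ?p ?q] => destruct (Rle_dec p q) end; lra.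
Qed.

Lemma clamp_id a b u : a <= u <= b -> clamp a b u = u.
Proof.
  intros Hu. unfold clamp, Rmin. destruct (Rle_dec b u); unfold Rmax;
  match goal with |- context [Rle_dec ?p ?q] => destruct (Rle_dec p q) end; lra.
Qed.

Variables alpha alpha_inv : C -> C.
Hypothesis HG : forall t, G t -> G (alpha t).
Hypothesis HGi : forall t, G t -> G (alpha_inv t).
Hypothesis Hinv1 : forall t, G t -> alpha_inv (alpha t) = t.
Hypothesis Hinv2 : forall t, G t -> alpha (alpha_inv t) = t.
Hypothesis Hca : forall t, G t -> ctsw G alpha t.
Hypothesis Hrev : changes_orientation gam alpha.

Lemma rev_fixed : exists q, G q /\ alpha q = q.
Proof.
  set (q0 := gam 0).
  assert (Gq0 : G q0) by (exists 0; auto).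
  destruct (classic (alpha q0 = q0)) as [F|NF]; [exists q0; auto|].
  set (w := alpha_inv q0). assert (Gw : G w) by (apply HGi; auto).
  assert (Aw : alpha w = q0) by (apply Hinv2; auto).
  assert (Nw : w <> q0) by (intros E; apply NF; rewrite <- E at 1; auto).
  set (r := alpha q0). assert (Gr : G r) by (apply HG; auto).
  assert (Nr : r <> q0) by auto.
  set (cw := coord gam 0 w).
  assert (Hcw : 0 < cw < 1).
  { split. apply coord_pos; auto. apply (coord_spec gam Hgam 0 w Gw). }
  assert (Ecw : gam cw = w) by (apply gam_coord0'; auto).
  set (rho := coord gam 0 r).
  assert (Hrho : 0 < rho < 1).
  { split. apply coord_pos; auto. apply (coord_spec gam Hgam 0 r Gr). }
  set (f := fun u => coord gam 0 (alpha (gam u))).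
  assert (Gg : forall u, G (gam u)) by (intros u; exists u; auto).
  assert (L2 : forall u, 0 < u < cw -> alpha (gam u) <> q0).
  { intros u Hu E. assert (gam u = w).
    { unfold w. rewrite <- E. rewrite Hinv1; auto. }
    assert (coord gam 0 (gam u) = u) by (apply gam_coord0; lra).
    fold cw in Hcw. rewrite H in H0. fold cw in H0. lra. }
  assert (fb : forall u, 0 <= f u < 1).
  { intros u. apply (coord_spec gam Hgam 0 _ (HG _ (Gg u))). }
  assert (L3 : forall u v, 0 < u -> u < v -> v < cw -> f v < f u).
  { intros u v Hu Huv Hv.
    assert (P : pos_ordered gam (gam u) (gam v) w).
    { exists u, v, cw. repeat split; auto; lra. }
    apply Hrev in P. rewrite Aw in P.
    apply (pos_coord gam Hgam 0 _ _ (HG _ (Gg v)) (HG _ (Gg u)) (L2 v ltac:(lra)) (L2 u ltac:(lra))) in P.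
    exact P. }
  assert (L7 : forall u, 0 < u < cw -> forall eps, 0 < eps -> exists d, 0 < d /\
     forall u', Rabs (u' - u) < d -> Rabs (f u' - f u) < eps).
  { intros u Hu eps He.
    destruct (coord_cont (alpha (gam u)) (HG _ (Gg u)) (L2 u Hu) eps He) as [d5 [Hd5 P5]].
    destruct (Hca (gam u) (Gg u) d5 Hd5) as [da [Hda Pa]].
    destruct (gam_cont gam Hgam u da Hda) as [dg [Hdg Pg]].
    exists (Rmin dg (Rmin u (cw - u))). split.
    { repeat apply Rmin_glb_lt; lra. }
    intros u' Hu'. pose proof (Rmin_l dg (Rmin u (cw - u))).
    pose proof (Rmin_r dg (Rmin u (cw - u))). pose proof (Rmin_l u (cw - u)).
    pose proof (Rmin_r u (cw - u)).
    apply Rabs_def2 in Hu' as Hu2.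
    apply P5. apply HG, Gg. apply L2; lra.
    apply Pa. apply Gg. apply Pg. lra. }
  destruct (coord_cont r Gr Nr (rho / 2) ltac:(lra)) as [d5 [Hd5 P5]].
  destruct (Hca q0 Gq0 d5 Hd5) as [da [Hda Pa]].
  destruct (gam_cont gam Hgam 0 da Hda) as [dg [Hdg Pg]].
  set (ua := Rmin (dg / 2) (Rmin (cw / 2) (rho / 4))).
  assert (Hua : 0 < ua) by (repeat apply Rmin_glb_lt; lra).
  assert (ua <= dg / 2) by apply Rmin_l.
  assert (ua <= cw / 2) by (eapply Rle_trans; [apply Rmin_r| apply Rmin_l]).
  assert (ua <= rho / 4) by (eapply Rle_trans; [apply Rmin_r| apply Rmin_r]).
  assert (Fua : f ua > ua).
  { assert (Rabs (f ua - rho) < rho / 2).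
    { apply P5. apply HG, Gg. apply L2; lra. apply Pa. apply Gg. apply Pg.
      rewrite Rminus_0_r, Rabs_right; lra. }
    apply Rabs_def2 in H2. lra. }
  set (d0 := Rmin (cw / 2) ((1 - f ua) / 2)).
  assert (Hd0 : 0 < d0 < 1/2).
  { split. apply Rmin_glb_lt; pose proof (fb ua); lra.
    eapply Rle_lt_trans; [apply Rmin_l| lra]. }
  assert (d0 <= cw / 2) by apply Rmin_l.
  assert (d0 <= (1 - f ua) / 2) by apply Rmin_r.
  destruct (near_q0 d0 Hd0) as [e6 [He6 P6]].
  destruct (Hca w Gw e6 He6) as [da2 [Hda2 Pa2]].
  destruct (gam_cont gam Hgam cw da2 Hda2) as [dg2 [Hdg2 Pg2]].
  set (mx := Rmax ua (Rmax (cw / 2) (cw - dg2 / 2))).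
  assert (mx < cw) by (unfold mx; repeat apply Rmax_lub_lt; lra).
  assert (ua <= mx) by apply Rmax_l.
  assert (cw / 2 <= mx) by (eapply Rle_trans; [apply Rmax_l| apply Rmax_r]).
  assert (cw - dg2 / 2 <= mx) by (eapply Rle_trans; [apply Rmax_r| apply Rmax_r]).
  set (ub := (cw + mx) / 2).
  assert (Fub : f ub < ub).
  { assert (Fl : f ub < f ua) by (apply L3; unfold ub; lra).
    destruct (P6 (alpha (gam ub))) as [A|A].
    - apply HG, Gg.
    - apply L2. unfold ub; lra.
    - change (gam 0) with q0. rewrite <- Aw. apply Pa2. apply Gg. rewrite <- Ecw. apply Pg2.
      unfold ub. rewrite Rabs_left; lra.
    - unfold f. unfold ub in *. lra.
    - unfold f in *. lra. }
  assert (Huab : ua < ub) by (unfold ub; lra).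
  assert (Hubc : ub < cw) by (unfold ub; lra).
  set (F := fun u => clamp ua ub u - f (clamp ua ub u)).
  assert (CF : continuity F).
  { intros x. apply eps_cont_pt. intros eps He.
    assert (Hc := clamp_in ua ub x (Rlt_le _ _ Huab)).
    destruct (L7 (clamp ua ub x) ltac:(lra) (eps / 2) ltac:(lra)) as [d [Hd P]].
    exists (Rmin d (eps / 2)). split; [apply Rmin_glb_lt; lra|].
    intros y Hy. pose proof (Rmin_l d (eps/2)). pose proof (Rmin_r d (eps/2)).
    pose proof (clamp_lip ua ub y x (Rlt_le _ _ Huab)).
    specialize (P (clamp ua ub y) ltac:(lra)).
    unfold F. apply Rabs_def2 in P. apply Rabs_def1.
    - assert (HH : Rabs (clamp ua ub y - clamp ua ub x) < eps / 2) by lra.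
      apply Rabs_def2 in HH. lra.
    - assert (HH : Rabs (clamp ua ub y - clamp ua ub x) < eps / 2) by lra.
      apply Rabs_def2 in HH. lra. }
  assert (Fa : F ua < 0) by (unfold F; rewrite clamp_id; lra).
  assert (Fb : 0 < F ub) by (unfold F; rewrite clamp_id; lra).
  destruct (IVT F ua ub CF Huab Fa Fb) as [z [Hz Fz]].
  unfold F in Fz. rewrite clamp_id in Fz by lra.
  exists (gam z). split; [apply Gg|].
  assert (E : f z = z) by lra. unfold f in E.
  rewrite <- (gam_coord0' (alpha (gam z))) by (apply HG, Gg). rewrite E. auto.
Qed.

End Rev.

Lemma iterz_pos (al ali : C -> C) N x : iterz al ali (Z.of_nat N) x = Nat.iter N al x.
Proof. destruct N; [reflexivity|]. simpl. rewrite SuccNat2Pos.id_succ. reflexivity. Qed.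

Lemma iterz_neg (al ali : C -> C) N x : iterz al ali (- Z.of_nat N) x = Nat.iter N ali x.
Proof. destruct N; [reflexivity|]. simpl. rewrite SuccNat2Pos.id_succ. reflexivity. Qed.

Lemma iter_add (f : C -> C) p q x : Nat.iter (p + q) f x = Nat.iter p f (Nat.iter q f x).
Proof. induction p; simpl; auto. rewrite IHp; auto. Qed.

Lemma iter_mul (f : C -> C) m n x : Nat.iter (m * n) f x = Nat.iter n (Nat.iter m f) x.
Proof.
  induction n; simpl.
  - rewrite Nat.mul_0_r. reflexivity.
  - rewrite Nat.mul_succ_r, Nat.add_comm, iter_add, IHn. reflexivity.
Qed.

Lemma pres_iter gam (al : C -> C) n : preserves_orientation gam al ->
  preserves_orientation gam (Nat.iter n al).
Proof.
  intros H. induction n; simpl; intros z1 z2 z3 P; auto.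
  apply H. apply IHn. exact P.
Qed.

Lemma changes_2 gam (al : C -> C) : changes_orientation gam al ->
  preserves_orientation gam (Nat.iter 2 al).
Proof. intros H z1 z2 z3 P. simpl. apply H in P. apply H in P. exact P. Qed.

Section Main.
Variables (gam : R -> C) (alpha alpha_inv a b dm d1 : C -> C) (aX bX : R) (m : nat).
Hypothesis Hgam : jordan_smooth_param gam.
Let G := curve gam.
Hypothesis HG : forall t, G t -> G (alpha t).
Hypothesis HGi : forall t, G t -> G (alpha_inv t).
Hypothesis Hinv1 : forall t, G t -> alpha_inv (alpha t) = t.
Hypothesis Hinv2 : forall t, G t -> alpha (alpha_inv t) = t.
Hypothesis Hca : forall t, G t -> ctsw G alpha t.
Hypothesis Hcai : forall t, G t -> ctsw G alpha_inv t.
Hypothesis Ha : forall y, G y -> ctsw G a y.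
Hypothesis Hb : forall y, G y -> ctsw G b y.
Hypothesis Hd1 : forall y, G y -> ctsw G d1 y.
Hypothesis Hd1n : forall y, G y -> d1 y <> RtoC 0.
Hypothesis Hdm : forall y, G y -> dm y = fm d1 alpha m y.
Hypothesis Hm1 : (1 <= m)%nat.
Variable sp : R.
Hypothesis Hfix : Nat.iter m alpha (gam sp) = gam sp.
Hypothesis Hpres : preserves_orientation gam (Nat.iter m alpha).

Let h := Nat.iter m alpha.
Let hi := Nat.iter m alpha_inv.

Lemma itG n y : G y -> G (Nat.iter n alpha y).
Proof. intros; apply iter_stable; auto. Qed.
Lemma itGi n y : G y -> G (Nat.iter n alpha_inv y).
Proof. intros; apply iter_stable; auto. Qed.

Lemma alpha_inj x y : G x -> G y -> alpha x = alpha y -> x = y.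
Proof. intros Gx Gy E. rewrite <- (Hinv1 x Gx), <- (Hinv1 y Gy), E. auto. Qed.

Lemma alphai_inj x y : G x -> G y -> alpha_inv x = alpha_inv y -> x = y.
Proof. intros Gx Gy E. rewrite <- (Hinv2 x Gx), <- (Hinv2 y Gy), E. auto. Qed.

Lemma h_hi n x : G x -> Nat.iter n alpha (Nat.iter n alpha_inv x) = x.
Proof.
  revert x. induction n; intros x Gx; simpl; auto.
  rewrite <- iter_shift, Hinv2 by (apply itGi; auto). auto.
Qed.

Lemma hi_h n x : G x -> Nat.iter n alpha_inv (Nat.iter n alpha x) = x.
Proof.
  revert x. induction n; intros x Gx; simpl; auto.
  rewrite <- iter_shift, Hinv1 by (apply itG; auto). auto.
Qed.

Lemma hi_comm n y : G y -> Nat.iter n alpha_inv (alpha y) = alpha (Nat.iter n alpha_inv y).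
Proof.
  intros Gy. induction n; simpl; auto. rewrite IHn.
  rewrite Hinv1, Hinv2; auto; apply itGi; auto.
Qed.

Lemma h_comm_i n y : G y -> Nat.iter n alpha (alpha_inv y) = alpha_inv (Nat.iter n alpha y).
Proof.
  intros Gy. induction n; simpl; auto. rewrite IHn.
  rewrite Hinv1, Hinv2; auto; apply itG; auto.
Qed.

Lemma h_inj x y : G x -> G y -> h x = h y -> x = y.
Proof.
  intros Gx Gy E. rewrite <- (hi_h m x Gx), <- (hi_h m y Gy). unfold h in E. rewrite E. auto.
Qed.

Lemma h_mono : forall x y, G x -> G y -> x <> gam sp -> y <> gam sp ->
  coord gam sp x < coord gam sp y -> coord gam sp (h x) < coord gam sp (h y).
Proof.
  intros x y Gx Gy Nx Ny L.
  assert (Nh : forall z, G z -> z <> gam sp -> h z <> gam sp).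
  { intros z Gz Nz E. apply Nz. apply h_inj; auto. exists sp; auto. unfold h. rewrite Hfix. auto. }
  apply (pos_coord gam Hgam sp x y Gx Gy Nx Ny) in L.
  apply Hpres in L. fold h in L. unfold h in L at 1. rewrite Hfix in L.
  apply (pos_coord gam Hgam sp); auto; try apply itG; auto.
Qed.

Lemma orbit_h t : G t -> exists Y, G Y /\ cvC (fun n => Nat.iter n h t) Y.
Proof.
  apply (orbit_conv gam Hgam sp h).
  - intros; apply itG; auto.
  - intros z Gz Nz E. apply Nz. apply h_inj; auto. exists sp; auto. unfold h. rewrite Hfix. auto.
  - apply Hfix.
  - apply h_mono.
Qed.

Lemma orbit_hi t : G t -> exists Y, G Y /\ cvC (fun n => Nat.iter n hi t) Y.
Proof.
  assert (Gp : G (gam sp)) by (exists sp; auto).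
  assert (Hip : hi (gam sp) = gam sp).
  { unfold hi. rewrite <- Hfix at 1. apply hi_h; auto. }
  destruct (inv_mono gam Hgam sp h hi) as [N M].
  - intros; apply itGi; auto.
  - intros; apply h_hi; auto.
  - apply Hfix.
  - intros; apply itG; auto.
  - apply h_mono.
  - apply (orbit_conv gam Hgam sp hi); auto. intros; apply itGi; auto.
Qed.

Lemma lim_eq (g : C -> C) i :
  (forall y, G y -> G (g y)) -> (forall y, G y -> ctsw G g y) ->
  (forall t, G t -> exists Y, G Y /\ cvC (fun n => Nat.iter n g t) Y) ->
  (forall y, G y -> g (alpha y) = alpha (g y)) ->
  (forall Y, G Y -> g Y = Y -> Nat.iter m alpha Y = Y) ->
  forall t, G t -> Lim_seq (fun n => eta i a b alpha dm m aX bX (Nat.iter n g t)) =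
                   Lim_seq (fun n => eta i a b alpha dm m aX bX (Nat.iter n g (alpha t))).
Proof.
  intros Hg Hgc Horb Hcom Hfx t Gt.
  destruct (Horb t Gt) as [Y [GY HY]].
  assert (Gy : forall n, G (Nat.iter n g t)) by (intros; apply iter_stable; auto).
  assert (gY : g Y = Y).
  { apply (cvC_unique (fun n => Nat.iter (S n) g t)).
    - apply (cvC_ctsw G g (fun n => Nat.iter n g t)); auto.
    - apply cvC_shift; auto. }
  assert (HmY := Hfx Y GY gY).
  assert (Com : forall n, Nat.iter n g (alpha t) = alpha (Nat.iter n g t)).
  { induction n; simpl; auto. rewrite IHn. apply Hcom; auto. }
  rewrite (Lim_seq_ext (fun n => eta i a b alpha dm m aX bX (Nat.iter n g (alpha t))) (fun n => eta i a b alpha dm m aX bX (alpha (Nat.iter n g t))))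
    by (intros; rewrite Com; auto).
  rewrite (is_lim_seq_unique _ _ (eta_lim G alpha d1 a b dm m aX bX HG Hca Ha Hb Hd1 Hd1n Hdm i _ Y Gy GY HY)).
  assert (HA : cvC (fun n => alpha (Nat.iter n g t)) (alpha Y)) by (apply (cvC_ctsw G); auto).
  rewrite (is_lim_seq_unique _ _ (eta_lim G alpha d1 a b dm m aX bX HG Hca Ha Hb Hd1 Hd1n Hdm i _ (alpha Y)
     (fun n => HG _ (Gy n)) (HG _ GY) HA)).
  rewrite Etgt_cyc; auto.
Qed.

Lemma hc y : G y -> ctsw G h y.
Proof. intros; apply iter_ctsw'; auto. Qed.
Lemma hic y : G y -> ctsw G hi y.
Proof. intros; apply iter_ctsw'; auto. Qed.

Lemma eta_plus_alpha i t : G t ->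
  eta_plus i a b alpha alpha_inv dm m aX bX t = eta_plus i a b alpha alpha_inv dm m aX bX (alpha t).
Proof.
  intros Gt. unfold eta_plus.
  rewrite !(Lim_seq_ext (fun n => eta i a b alpha dm m aX bX (iterz alpha alpha_inv (Z.of_nat (m * n)) _))
    (fun n => eta i a b alpha dm m aX bX (Nat.iter n h _)))
    by (intros; rewrite iterz_pos, iter_mul; auto).
  apply lim_eq; auto.
  - intros; apply itG; auto.
  - apply hc.
  - apply orbit_h.
  - intros y Gy. unfold h. apply iter_shift.
Qed.

Lemma eta_minus_alpha i t : G t ->
  eta_minus i a b alpha alpha_inv dm m aX bX t = eta_minus i a b alpha alpha_inv dm m aX bX (alpha t).
Proof.
  intros Gt. unfold eta_minus.
  rewrite !(Lim_seq_ext (fun n => eta i a b alpha dm m aX bX (iterz alpha alpha_inv (- Z.of_nat (m * n)) _))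
    (fun n => eta i a b alpha dm m aX bX (Nat.iter n hi _)))
    by (intros; rewrite iterz_neg, iter_mul; auto).
  apply lim_eq; auto.
  - intros; apply itGi; auto.
  - apply hic.
  - apply orbit_hi.
  - intros y Gy. unfold hi. apply hi_comm; auto.
  - intros Y GY E. rewrite <- E at 1. unfold hi. apply h_hi; auto.
Qed.

Lemma Phi_map g t : G t -> ctsw G g t -> (forall y, G y -> G (g y)) ->
  (forall x y, G x -> G y -> g x = g y -> x = y) ->
  (forall y, G y -> Nat.iter m alpha (g y) = g (Nat.iter m alpha y)) ->
  Phi G alpha m t -> Phi G alpha m (g t).
Proof.
  intros Gt Hc Hg Hi Hcom HP eps He.
  destruct (Hc eps He) as [d [Hd P]].
  destruct (HP d Hd) as [tau [Gtau [Ntau Dtau]]].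
  exists (g tau). split; auto. split.
  - rewrite Hcom; auto. intros E. apply Ntau. apply Hi; auto. apply itG; auto.
  - apply P; auto.
Qed.

Lemma Phi_alpha t : G t -> (Phi G alpha m t <-> Phi G alpha m (alpha t)).
Proof.
  intros Gt. split; intros HP.
  - apply Phi_map; auto. apply alpha_inj. intros; apply iter_shift.
  - rewrite <- (Hinv1 t Gt). apply Phi_map; auto. apply alphai_inj.
    intros; apply h_comm_i; auto.
Qed.

Lemma iterz_G k t : G t -> G (iterz alpha alpha_inv k t).
Proof. intros Gt. destruct k; simpl; auto; apply iter_stable; auto. Qed.

Lemma inv_eq {X : Type} (F : C -> X) :
  (forall t, G t -> F t = F (alpha t)) ->
  forall k t, G t -> F t = F (iterz alpha alpha_inv k t).
Proof.
  intros H k t Gt.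
  assert (Hi : forall t, G t -> F t = F (alpha_inv t)).
  { intros s Gs. rewrite (H (alpha_inv s)), Hinv2; auto. }
  destruct k; simpl; auto.
  - induction (Pos.to_nat p); simpl; auto. rewrite IHn. apply H. apply itG; auto.
  - induction (Pos.to_nat p); simpl; auto. rewrite IHn. apply Hi. apply itGi; auto.
Qed.

Lemma inv_iff (P : C -> Prop) :
  (forall t, G t -> (P t <-> P (alpha t))) ->
  forall k t, G t -> (P t <-> P (iterz alpha alpha_inv k t)).
Proof.
  intros H k t Gt.
  assert (Hi : forall t, G t -> (P t <-> P (alpha_inv t))).
  { intros s Gs. rewrite (H (alpha_inv s)), Hinv2; auto. tauto. }
  destruct k; simpl; [tauto| |].
  - induction (Pos.to_nat p); simpl; [tauto|]. rewrite IHn. apply H. apply itG; auto.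
  - induction (Pos.to_nat p); simpl; [tauto|]. rewrite IHn. apply Hi. apply itGi; auto.
Qed.

Lemma main_conclusion :
  (forall (i : nat) (k : Z) (t : C), (i = 0%nat \/ i = 1%nat) -> curve gam t ->
     eta_minus i a b alpha alpha_inv dm m aX bX t =
       eta_minus i a b alpha alpha_inv dm m aX bX (iterz alpha alpha_inv k t) /\
     eta_plus i a b alpha alpha_inv dm m aX bX t =
       eta_plus i a b alpha alpha_inv dm m aX bX (iterz alpha alpha_inv k t)) /\
  (forall (j : nat) (k : Z) (t : C), (1 <= j <= 5)%nat -> curve gam t ->
     (Gam j gam a b alpha alpha_inv dm m aX bX t <->
      Gam j gam a b alpha alpha_inv dm m aX bX (iterz alpha alpha_inv k t))).
Proof.
  assert (EM : forall i k t, G t -> eta_minus i a b alpha alpha_inv dm m aX bX t =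
       eta_minus i a b alpha alpha_inv dm m aX bX (iterz alpha alpha_inv k t)).
  { intros i. apply inv_eq. apply eta_minus_alpha. }
  assert (EP : forall i k t, G t -> eta_plus i a b alpha alpha_inv dm m aX bX t =
       eta_plus i a b alpha alpha_inv dm m aX bX (iterz alpha alpha_inv k t)).
  { intros i. apply inv_eq. apply eta_plus_alpha. }
  assert (PH : forall k t, G t -> (Phi G alpha m t <-> Phi G alpha m (iterz alpha alpha_inv k t))).
  { apply inv_iff. apply Phi_alpha. }
  split.
  - intros i k t _ Gt. split; auto.
  - intros j k t Hj Gt.
    assert (Gt' := iterz_G k t Gt).
    pose proof (EM 0%nat k t Gt). pose proof (EM 1%nat k t Gt).
    pose proof (EP 0%nat k t Gt). pose proof (EP 1%nat k t Gt).
    pose proof (PH k t Gt).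
    destruct j as [|[|[|[|[|[|j]]]]]]; try lia; unfold Gam; fold G;
      rewrite <- ?H, <- ?H0, <- ?H1, <- ?H2; tauto.
Qed.

End Main.

Theorem corollary5p2
  (gam : R -> C) (alpha alpha_inv : C -> C) (a b : C -> C)
  (aX bX : R) (m : nat) (dm : C -> C)
  (Hgam : jordan_smooth_param gam)
  (Halpha : diffeo_on (curve gam) alpha alpha_inv)
  (Hper : exists t, periodic_point (curve gam) alpha t)
  (Hboyd : 0 <= aX <= bX /\ bX <= 1)
  (Ha : cont_on (curve gam) a) (Hb : cont_on (curve gam) b)
  (Hm : is_m gam alpha m)
  (Hdm : forall t, curve gam t -> curve_deriv (curve gam) (Nat.iter m alpha) t (dm t)) :
  (forall (i : nat) (k : Z) (t : C), (i = 0%nat \/ i = 1%nat) -> curve gam t ->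
     eta_minus i a b alpha alpha_inv dm m aX bX t =
       eta_minus i a b alpha alpha_inv dm m aX bX (iterz alpha alpha_inv k t) /\
     eta_plus i a b alpha alpha_inv dm m aX bX t =
       eta_plus i a b alpha alpha_inv dm m aX bX (iterz alpha alpha_inv k t)) /\
  (forall (j : nat) (k : Z) (t : C), (1 <= j <= 5)%nat -> curve gam t ->
     (Gam j gam a b alpha alpha_inv dm m aX bX t <->
      Gam j gam a b alpha alpha_inv dm m aX bX (iterz alpha alpha_inv k t))).
Proof.
  destruct Halpha as [HG [HGi [Hinv1 [Hinv2 [[d1 [Cd1 Dd1]] [d2 [Cd2 Dd2]]]]]]].
  assert (Hca : forall t, curve gam t -> ctsw (curve gam) alpha t).
  { intros t Gt. apply (derw_ctsw _ _ _ (d1 t)). apply curve_deriv_derw. apply Dd1; auto. }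
  assert (Hcai : forall t, curve gam t -> ctsw (curve gam) alpha_inv t).
  { intros t Gt. apply (derw_ctsw _ _ _ (d2 t)). apply curve_deriv_derw. apply Dd2; auto. }
  assert (Ha' := cont_on_ctsw _ _ Ha). assert (Hb' := cont_on_ctsw _ _ Hb).
  assert (Hd1c := cont_on_ctsw _ _ Cd1).
  assert (Hd1n : forall y, curve gam y -> d1 y <> RtoC 0) by (intros; apply Dd1; auto).
  assert (Hinj : forall x y, curve gam x -> curve gam y -> alpha x = alpha y -> x = y).
  { intros x y Gx Gy E. rewrite <- (Hinv1 x Gx), <- (Hinv1 y Gy), E. auto. }
  assert (Hdm' : forall y, curve gam y -> dm y = fm d1 alpha m y).
  { intros y Gy. apply (derw_unique (curve gam) (Nat.iter m alpha) y).
    - apply curve_acc; auto.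
    - apply curve_deriv_derw. apply Hdm; auto.
    - apply iter_derw; auto. intros z Gz. apply curve_deriv_derw. apply Dd1; auto. }
  assert (Setup : exists sp, (1 <= m)%nat /\ Nat.iter m alpha (gam sp) = gam sp /\
     preserves_orientation gam (Nat.iter m alpha)).
  { destruct Hm as [[Hpres Hmul] | [Hch Hm2]].
    - destruct Hper as [t Ht]. destruct (Hmul t Ht) as [Hm0 [Hmt _]].
      destruct Ht as [[sp Hsp] _]. exists sp. subst t. split; [lia|]. split; auto.
      apply pres_iter; auto.
    - destruct (rev_fixed gam Hgam alpha alpha_inv HG HGi Hinv1 Hinv2 Hca Hch) as [q [[sp Hsp] Hq]].
      subst m. exists sp. split; [lia|]. split.
      + simpl. rewrite Hsp, Hq, Hq. auto.
      + apply changes_2; auto. }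
  destruct Setup as [sp [Hm1 [Hfix Hpres]]].
  eapply main_conclusion; eauto.
Qed.
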